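(* Let $S\subset\mathbb{R}^2$ be a finite set of points in general position, let $f:\mathbb{R}^2\times[0,1]\to\mathbb{R}^2$ be an ambient isotopy, and let $S(t)=\{f(s,t): s\in S\}$ for $t\in[0,1]$. Suppose there is $t_0\in(0,1]$ such that $S(t)$ is in general position for all $t\in[0,t_0)$, and such that in $S(t_0)$ the triple $\{f(a,t_0),f(b,t_0),f(c,t_0)\}$ for distinct $a,b,c\in S$ is collinear and is the only collinear triple. If $f(c,t_0)$ lies on the segment between $f(a,t_0)$ and $f(b,t_0)$, then $ab$ is an exit edge of $S=S(0)$ with witness $c$.
   Context: General position: no three points collinear. An ambient isotopy of $\mathbb{R}^2$ is a continuous map $f:\mathbb{R}^2\times[0,1]\to\mathbb{R}^2$ such that $f(\cdot,t)$ is a homeomorphism for every $t$ and $f(\cdot,0)$ is the identity. For distinct $a,b,c\in S$, the segment $ab$ is an exit edge of $S$ with witness $c$ if there is no $p\in S$ such that the line through $a$ and $p$ strictly separates $b$ from $c$, and there is no $p\in S$ such that the line through $b$ and $p$ strictly separates $a$ from $c$. *)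

(* Defs.v *)
From Stdlib Require Import Reals List.
Import ListNotations.
Open Scope R_scope.

Definition point := (R * R)%type.

Definition orient (a p x : point) : R :=
  (fst p - fst a) * (snd x - snd a) - (snd p - snd a) * (fst x - fst a).

Definition collinear (p q r : point) : Prop := orient p q r = 0.

Definition general_position (S : list point) : Prop :=
  forall p q r, In p S -> In q S -> In r S ->
    p <> q -> q <> r -> p <> r -> ~ collinear p q r.

Definition continuous2 (h : point -> point) : Prop :=
  forall x eps, 0 < eps -> exists delta, 0 < delta /\
    forall y, Rabs (fst y - fst x) < delta -> Rabs (snd y - snd x) < delta ->
      Rabs (fst (h y) - fst (h x)) < eps /\ Rabs (snd (h y) - snd (h x)) < eps.

Definition homeomorphism (h : point -> point) : Prop :=
  exists g : point -> point,
    (forall x, g (h x) = x) /\ (forall y, h (g y) = y) /\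
    continuous2 h /\ continuous2 g.

Definition continuous_on_R2_I (f : point -> R -> point) : Prop :=
  forall x t, 0 <= t <= 1 -> forall eps, 0 < eps -> exists delta, 0 < delta /\
    forall y s, 0 <= s <= 1 ->
      Rabs (fst y - fst x) < delta -> Rabs (snd y - snd x) < delta ->
      Rabs (s - t) < delta ->
      Rabs (fst (f y s) - fst (f x t)) < eps /\
      Rabs (snd (f y s) - snd (f x t)) < eps.

Definition ambient_isotopy (f : point -> R -> point) : Prop :=
  continuous_on_R2_I f /\
  (forall t, 0 <= t <= 1 -> homeomorphism (fun x => f x t)) /\
  (forall x, f x 0 = x).

Definition St (f : point -> R -> point) (S : list point) (t : R) : list point :=
  map (fun s => f s t) S.

Definition on_segment (x p q : point) : Prop :=
  exists l, 0 <= l <= 1 /\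
    x = ((1 - l) * fst p + l * fst q, (1 - l) * snd p + l * snd q).

(* the line through u and p strictly separates x from y *)
Definition strictly_separates (u p x y : point) : Prop :=
  orient u p x * orient u p y < 0.

Definition exit_edge (S : list point) (a b c : point) : Prop :=
  a <> b /\ b <> c /\ a <> c /\ In a S /\ In b S /\ In c S /\
  (~ exists p, In p S /\ strictly_separates a p b c) /\
  (~ exists p, In p S /\ strictly_separates b p a c).

(* Main.v *)
Require Import Defs.
From Stdlib Require Import Reals List Lra.
Import ListNotations.
Open Scope R_scope.

Definition pt_dec (p q : point) : {p = q} + {p <> q}.
Proof. decide equality; apply Req_dec_T. Defined.

Definition clampt (t0 s : R) : R := Rmax 0 (Rmin s t0).

Lemma clampt_range t0 s : 0 < t0 -> 0 <= clampt t0 s <= t0.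
Proof. intros; unfold clampt, Rmax, Rmin; repeat destruct Rle_dec; lra. Qed.

Lemma clampt_id t0 s : 0 <= s <= t0 -> clampt t0 s = s.
Proof. intros; unfold clampt, Rmax, Rmin; repeat destruct Rle_dec; lra. Qed.

Lemma clampt_lip t0 s t : 0 < t0 -> Rabs (clampt t0 s - clampt t0 t) <= Rabs (s - t).
Proof.
  intros; unfold clampt, Rmax, Rmin; repeat destruct Rle_dec;
  unfold Rabs; repeat destruct Rcase_abs; lra.
Qed.

Lemma cont_coord (f : point -> R -> point) t0 x :
  continuous_on_R2_I f -> 0 < t0 <= 1 ->
  continuity (fun s => fst (f x (clampt t0 s))) /\
  continuity (fun s => snd (f x (clampt t0 s))).
Proof.
  intros Hc Ht0; split; intros t;
  unfold continuity_pt, continue_in, limit1_in, limit_in; simpl; unfold R_dist;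
  intros eps Heps;
  (assert (Hr := clampt_range t0 t ltac:(lra));
   destruct (Hc x (clampt t0 t) ltac:(lra) eps Heps) as [d [Hd H]];
   exists d; split; [exact Hd|];
   intros s [_ Hs];
   assert (Hr' := clampt_range t0 s ltac:(lra));
   assert (Hl := clampt_lip t0 s t ltac:(lra));
   destruct (H x (clampt t0 s) ltac:(lra)) as [H1 H2];
   [ rewrite Rminus_eq_0, Rabs_R0; lra | rewrite Rminus_eq_0, Rabs_R0; lra | lra
   | assumption .. ]).
Qed.

Lemma f_inj (f : point -> R -> point) t x y :
  ambient_isotopy f -> 0 <= t <= 1 -> f x t = f y t -> x = y.
Proof.
  intros [_ [Hh _]] Ht E. destruct (Hh t Ht) as [g [Hg _]].
  rewrite <- (Hg x), <- (Hg y). simpl. now rewrite E.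
Qed.

Lemma sign_pres (S : list point) (f : point -> R -> point) (t0 : R) x y z :
  ambient_isotopy f -> 0 < t0 <= 1 ->
  (forall t, 0 <= t < t0 -> general_position (St f S t)) ->
  In x S -> In y S -> In z S -> x <> y -> y <> z -> x <> z ->
  orient (f x t0) (f y t0) (f z t0) <> 0 ->
  0 < orient x y z * orient (f x t0) (f y t0) (f z t0).
Proof.
  intros Hf Ht0 Hgp Hx Hy Hz Hxy Hyz Hxz Hn.
  set (U := fun s => orient (f x (clampt t0 s)) (f y (clampt t0 s)) (f z (clampt t0 s))).
  assert (HU : continuity U).
  { destruct Hf as [Hc _].
    destruct (cont_coord f t0 x Hc Ht0) as [X1 X2].
    destruct (cont_coord f t0 y Hc Ht0) as [Y1 Y2].
    destruct (cont_coord f t0 z Hc Ht0) as [Z1 Z2].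
    unfold U, orient.
    apply continuity_minus; apply continuity_mult; apply continuity_minus; assumption. }
  assert (U0 : U 0 = orient x y z).
  { unfold U. rewrite clampt_id by lra. destruct Hf as [_ [_ H0]]. now rewrite !H0. }
  assert (U1 : U t0 = orient (f x t0) (f y t0) (f z t0)).
  { unfold U. rewrite clampt_id by lra. reflexivity. }
  destruct (Rlt_dec 0 (U 0 * U t0)) as [Hp|Hp].
  - now rewrite <- U0, <- U1.
  - destruct (IVT_cor U 0 t0 HU ltac:(lra) ltac:(lra)) as [s [Hs Hs0]].
    exfalso. destruct (Req_dec s t0) as [->|Hne].
    + apply Hn. now rewrite <- U1.
    + assert (Hst : 0 <= s < t0) by lra.
      assert (Hs1 : 0 <= s <= 1) by lra.
      apply (Hgp s Hst (f x s) (f y s) (f z s)).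
      * unfold St. now apply (in_map (fun q => f q s)).
      * unfold St. now apply (in_map (fun q => f q s)).
      * unfold St. now apply (in_map (fun q => f q s)).
      * intro E. apply Hxy. exact (f_inj f s x y Hf Hs1 E).
      * intro E. apply Hyz. exact (f_inj f s y z Hf Hs1 E).
      * intro E. apply Hxz. exact (f_inj f s x z Hf Hs1 E).
      * unfold collinear. unfold U in Hs0. rewrite clampt_id in Hs0 by lra. exact Hs0.
Qed.

Lemma orient_self a p : orient a p p = 0.
Proof. unfold orient; ring. Qed.
Lemma orient_self2 a p : orient a a p = 0.
Proof. unfold orient; ring. Qed.

Theorem proposition2 (S : list point) (f : point -> R -> point)
  (a b c : point) (t0 : R) :
  NoDup S ->
  general_position S ->
  ambient_isotopy f ->
  0 < t0 <= 1 ->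
  (forall t, 0 <= t < t0 -> general_position (St f S t)) ->
  In a S -> In b S -> In c S -> a <> b -> b <> c -> a <> c ->
  collinear (f a t0) (f b t0) (f c t0) ->
  (forall p q r, In p (St f S t0) -> In q (St f S t0) -> In r (St f S t0) ->
     p <> q -> q <> r -> p <> r -> collinear p q r ->
     In p [f a t0; f b t0; f c t0] /\ In q [f a t0; f b t0; f c t0] /\
     In r [f a t0; f b t0; f c t0]) ->
  on_segment (f c t0) (f a t0) (f b t0) ->
  exit_edge S a b c.
Proof.
  intros _ _ Hf Ht0 Hgp Ha Hb Hc Hab Hbc Hac _ Huniq [l [Hl Hseg]].
  assert (Ht1 : 0 <= t0 <= 1) by lra.
  assert (Inj : forall x y, f x t0 = f y t0 -> x = y) by (intros; eapply f_inj; eauto).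
  assert (InS : forall x, In x S -> In (f x t0) (St f S t0))
    by (intros; unfold St; now apply (in_map (fun q => f q t0))).
  assert (NZ : forall x p y, In x S -> In p S -> In y S -> x <> p -> p <> y -> x <> y ->
             p <> a -> p <> b -> p <> c ->
             orient (f x t0) (f p t0) (f y t0) <> 0).
  { intros x p y Hx Hp Hy H1 H2 H3 Pa Pb Pc E.
    destruct (Huniq (f x t0) (f p t0) (f y t0) (InS x Hx) (InS p Hp) (InS y Hy))
      as [_ [Hq _]].
    - intro E'; apply H1; now apply Inj.
    - intro E'; apply H2; now apply Inj.
    - intro E'; apply H3; now apply Inj.
    - exact E.
    - simpl in Hq. destruct Hq as [E'|[E'|[E'|[]]]]; apply Inj in E'; subst; contradiction. }
  assert (Hla : l <> 0).
  { intro; subst. apply Hac. apply Inj. rewrite Hseg. destruct (f a t0); simpl; f_equal; ring. }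
  assert (Hlb : l <> 1).
  { intro; subst. apply Hbc. apply Inj. rewrite Hseg. destruct (f b t0); simpl; f_equal; ring. }
  unfold exit_edge. repeat split; try assumption.
  - intros [p [Hp Hsep]]. unfold strictly_separates in Hsep.
    destruct (pt_dec p a) as [->|Pa]; [rewrite orient_self2 in Hsep; lra|].
    destruct (pt_dec p b) as [->|Pb]; [rewrite orient_self in Hsep; lra|].
    destruct (pt_dec p c) as [->|Pc]; [rewrite orient_self in Hsep; lra|].
    assert (H1 := sign_pres S f t0 a p b Hf Ht0 Hgp Ha Hp Hb (not_eq_sym Pa) Pb Hab
                    (NZ a p b Ha Hp Hb (not_eq_sym Pa) Pb Hab Pa Pb Pc)).
    assert (H2 := sign_pres S f t0 a p c Hf Ht0 Hgp Ha Hp Hc (not_eq_sym Pa) Pc Hac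
                    (NZ a p c Ha Hp Hc (not_eq_sym Pa) Pc Hac Pa Pb Pc)).
    assert (E : orient (f a t0) (f p t0) (f c t0) = l * orient (f a t0) (f p t0) (f b t0)).
    { rewrite Hseg. unfold orient; simpl; ring. }
    rewrite E in H2.
    set (u0 := orient a p b) in *. set (v0 := orient a p c) in *.
    set (u1 := orient (f a t0) (f p t0) (f b t0)) in *.
    assert (0 < (u0*u1) * (v0 * (l*u1))) by (apply Rmult_lt_0_compat; lra).
    assert (0 <= l * (u1*u1)) by (apply Rmult_le_pos; [lra| apply Rle_0_sqr]).
    assert (0 < (u0*v0) * (l*(u1*u1))) by (replace ((u0*v0) * (l*(u1*u1))) with ((u0*u1) * (v0 * (l*u1))) by ring; lra).
    nra.
  - intros [p [Hp Hsep]]. unfold strictly_separates in Hsep.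
    destruct (pt_dec p b) as [->|Pb]; [rewrite orient_self2 in Hsep; lra|].
    destruct (pt_dec p a) as [->|Pa]; [rewrite orient_self in Hsep; lra|].
    destruct (pt_dec p c) as [->|Pc]; [rewrite orient_self in Hsep; lra|].
    assert (H1 := sign_pres S f t0 b p a Hf Ht0 Hgp Hb Hp Ha (not_eq_sym Pb) Pa (not_eq_sym Hab)
                    (NZ b p a Hb Hp Ha (not_eq_sym Pb) Pa (not_eq_sym Hab) Pa Pb Pc)).
    assert (H2 := sign_pres S f t0 b p c Hf Ht0 Hgp Hb Hp Hc (not_eq_sym Pb) Pc Hbc
                    (NZ b p c Hb Hp Hc (not_eq_sym Pb) Pc Hbc Pa Pb Pc)).
    assert (E : orient (f b t0) (f p t0) (f c t0) = (1 - l) * orient (f b t0) (f p t0) (f a t0)).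
    { rewrite Hseg. unfold orient; simpl; ring. }
    rewrite E in H2.
    set (u0 := orient b p a) in *. set (v0 := orient b p c) in *.
    set (u1 := orient (f b t0) (f p t0) (f a t0)) in *.
    assert (0 < (u0*u1) * (v0 * ((1-l)*u1))) by (apply Rmult_lt_0_compat; lra).
    assert (0 <= (1-l) * (u1*u1)) by (apply Rmult_le_pos; [lra| apply Rle_0_sqr]).
    assert (0 < (u0*v0) * ((1-l)*(u1*u1))) by (replace ((u0*v0) * ((1-l)*(u1*u1))) with ((u0*u1) * (v0 * ((1-l)*u1))) by ring; lra).
    nra.
Qed.
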